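(* The orbits of the action $\rho(P,A) = P^T A P$ of $\operatorname{Sp}(4)$ on $S(4,\mathbb{R})$ are exactly the following pairwise distinct sets: (i) for each $p > 0$, $\mathcal{J}_p^{+} = \{\sqrt{p}\,J\}$; (ii) for each $p > 0$, $\mathcal{J}_p^{-} = \{-\sqrt{p}\,J\}$; (iii) for each $p > 0$ and $q \in \mathbb{R}$, $\mathcal{A}_{p,q}^{+} = \{A \in S(4,\mathbb{R}) : A \neq \pm\sqrt{p}\,J,\ \operatorname{Pf}(A) = p,\ \operatorname{s}(A) = q\}$; (iv) for each $p < 0$ and $q \in \mathbb{R}$, $\mathcal{A}_{p,q}^{-} = \{A \in S(4,\mathbb{R}) : \operatorname{Pf}(A) = p,\ \operatorname{s}(A) = q\}$.
   Context: $S(4,\mathbb{R}) = \{A \in M(4,\mathbb{R}) : A^T = -A,\ \det A \neq 0\}$. $J = \operatorname{diag}(J_0,J_0)$ with $J_0 = \begin{bmatrix} 0 & 1 \\ -1 & 0\end{bmatrix}$, and $\operatorname{Sp}(4) = \{P \in M(4,\mathbb{R}) : P^T J P = J\}$. For $A = \begin{bmatrix} 0 & a & b & c \\ -a & 0 & d & e \\ -b & -d & 0 & f \\ -c & -e & -f & 0\end{bmatrix}$, $\operatorname{Pf}(A) = af - be + cd$ and $\operatorname{s}(A) = a + f$. *)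

(* Defs.v *)
From HB Require Import structures.
From mathcomp Require Import all_boot all_order all_algebra.
From mathcomp Require Import reals.
Set Implicit Arguments. Unset Strict Implicit. Unset Printing Implicit Defensive.
Import Order.TTheory GRing.Theory Num.Theory.
Local Open Scope ring_scope.

Section Defs.
Variable R : realType.

Definition i4 (k : nat) : 'I_4 := inord k.

Definition S4 (A : 'M[R]_4) : Prop := A^T = - A /\ \det A != 0.

(* J = diag(J0, J0), J0 = [[0,1],[-1,0]] *)
Definition Jmat : 'M[R]_4 :=
  \matrix_(i < 4, j < 4)
    if ((i == 0 :> nat) && (j == 1 :> nat)) || ((i == 2 :> nat) && (j == 3 :> nat)) then 1
    else if ((i == 1 :> nat) && (j == 0 :> nat)) || ((i == 3 :> nat) && (j == 2 :> nat)) then -1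
    else 0.

Definition Sp4 (P : 'M[R]_4) : Prop := P^T *m Jmat *m P = Jmat.

(* a = A01, b = A02, c = A03, d = A12, e = A13, f = A23 *)
Definition Pf (A : 'M[R]_4) : R :=
  A (i4 0) (i4 1) * A (i4 2) (i4 3) - A (i4 0) (i4 2) * A (i4 1) (i4 3)
  + A (i4 0) (i4 3) * A (i4 1) (i4 2).

Definition sfun (A : 'M[R]_4) : R := A (i4 0) (i4 1) + A (i4 2) (i4 3).

Definition sp_orbit (A : 'M[R]_4) : 'M[R]_4 -> Prop :=
  fun B => exists P, Sp4 P /\ B = P^T *m A *m P.

Inductive label :=
  | LJplus of R
  | LJminus of R
  | LAplus of R & R
  | LAminus of R & R.

Definition valid_label (l : label) : Prop :=
  match l with
  | LJplus p => 0 < p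
  | LJminus p => 0 < p
  | LAplus p _ => 0 < p
  | LAminus p _ => p < 0
  end.

Definition label_set (l : label) : 'M[R]_4 -> Prop :=
  match l with
  | LJplus p => fun A => A = Num.sqrt p *: Jmat
  | LJminus p => fun A => A = - (Num.sqrt p *: Jmat)
  | LAplus p q => fun A => S4 A /\ A <> Num.sqrt p *: Jmat
                   /\ A <> - (Num.sqrt p *: Jmat) /\ Pf A = p /\ sfun A = q
  | LAminus p q => fun A => S4 A /\ Pf A = p /\ sfun A = q
  end.

End Defs.

(* Main.v *)
Require Import Defs.
From HB Require Import structures.
From mathcomp Require Import all_boot all_order all_algebra.
From mathcomp Require Import reals.
From mathcomp Require Import ring lra.
From Stdlib Require Import Classical FunctionalExtensionality PropExtensionality.
Import Order.TTheory GRing.Theory Num.Theory.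
Local Open Scope ring_scope.

Set Implicit Arguments. Unset Strict Implicit. Unset Printing Implicit Defensive.

Section S.
Variable R : realType.
Local Notation M := 'M[R]_4.

Lemma i4E k : (k < 4)%N -> nat_of_ord (i4 k) = k.
Proof. by move=> hk; rewrite /Defs.i4 inordK. Qed.

Definition mxn (F : nat -> nat -> R) : M := \matrix_(i < 4, j < 4) F i j.
Lemma mxnE F k l : (k<4)%N -> (l<4)%N -> mxn F (i4 k) (i4 l) = F k l.
Proof. by move=> hk hl; rewrite mxE !i4E. Qed.

Lemma ord4 (i : 'I_4) : i = i4 i.
Proof. by apply/val_inj; rewrite /= i4E. Qed.

Lemma mx4P (X Y : M) :
  X (i4 0) (i4 0) = Y (i4 0) (i4 0) ->
  X (i4 0) (i4 1) = Y (i4 0) (i4 1) ->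
  X (i4 0) (i4 2) = Y (i4 0) (i4 2) ->
  X (i4 0) (i4 3) = Y (i4 0) (i4 3) ->
  X (i4 1) (i4 0) = Y (i4 1) (i4 0) ->
  X (i4 1) (i4 1) = Y (i4 1) (i4 1) ->
  X (i4 1) (i4 2) = Y (i4 1) (i4 2) ->
  X (i4 1) (i4 3) = Y (i4 1) (i4 3) ->
  X (i4 2) (i4 0) = Y (i4 2) (i4 0) ->
  X (i4 2) (i4 1) = Y (i4 2) (i4 1) ->
  X (i4 2) (i4 2) = Y (i4 2) (i4 2) ->
  X (i4 2) (i4 3) = Y (i4 2) (i4 3) ->
  X (i4 3) (i4 0) = Y (i4 3) (i4 0) ->
  X (i4 3) (i4 1) = Y (i4 3) (i4 1) ->
  X (i4 3) (i4 2) = Y (i4 3) (i4 2) ->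
  X (i4 3) (i4 3) = Y (i4 3) (i4 3) -> X = Y.
Proof.
move=> H00 H01 H02 H03 H10 H11 H12 H13 H20 H21 H22 H23 H30 H31 H32 H33.
apply/matrixP => i j; rewrite (ord4 i) (ord4 j).
case: i j => [[|[|[|[|i]]]] hi] [[|[|[|[|j]]]] hj] //=.
Qed.

Lemma sum4 (F : 'I_4 -> R) : \sum_(i < 4) F i = F (i4 0) + F (i4 1) + F (i4 2) + F (i4 3).
Proof.
rewrite !big_ord_recr big_ord0 /= add0r.
by congr (_ + _ + _ + _); congr F; apply/val_inj; rewrite /= i4E.
Qed.

Lemma mulE (X Y : M) k l : (X *m Y) (i4 k) (i4 l) =
  X (i4 k) (i4 0) * Y (i4 0) (i4 l) + X (i4 k) (i4 1) * Y (i4 1) (i4 l)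
+ X (i4 k) (i4 2) * Y (i4 2) (i4 l) + X (i4 k) (i4 3) * Y (i4 3) (i4 l).
Proof. by rewrite mxE sum4. Qed.
Lemma trE (X : M) k l : X^T (i4 k) (i4 l) = X (i4 l) (i4 k).
Proof. by rewrite mxE. Qed.
Lemma addE (X Y : M) k l : (X + Y) (i4 k) (i4 l) = X (i4 k) (i4 l) + Y (i4 k) (i4 l).
Proof. by rewrite mxE. Qed.
Lemma oppE (X : M) k l : (- X) (i4 k) (i4 l) = - X (i4 k) (i4 l).
Proof. by rewrite mxE. Qed.
Lemma scaleE (x : R) (X : M) k l : (x *: X) (i4 k) (i4 l) = x * X (i4 k) (i4 l).
Proof. by rewrite mxE. Qed.
Lemma oneE k l : (k<4)%N -> (l<4)%N -> (1%:M : M) (i4 k) (i4 l) = (k == l)%:R.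
Proof. by move=> hk hl; rewrite mxE -val_eqE /= !i4E. Qed.
Lemma zeroE k l : (0 : M) (i4 k) (i4 l) = 0.
Proof. by rewrite mxE. Qed.

Definition skf (a b c d e f : R) (i j : nat) : R :=
  match i, j with
  | 0,1 => a | 0,2 => b | 0,3 => c | 1,2 => d | 1,3 => e | 2,3 => f
  | 1,0 => -a | 2,0 => -b | 3,0 => -c | 2,1 => -d | 3,1 => -e | 3,2 => -f
  | _,_ => 0 end.
Definition sk a b c d e f := mxn (skf a b c d e f).

Ltac ent := apply: mx4P;
  repeat (first [rewrite mulE | rewrite trE | rewrite addE | rewrite oppE
                | rewrite scaleE | rewrite zeroE | rewrite oneE // | rewrite mxnE //]); rewrite /=.

Lemma JE : Jmat R = sk 1 0 0 0 0 1 :> M.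
Proof. by ent; rewrite /Jmat mxE !i4E //= oppr0. Qed.

Lemma CH a b c d e f :
  sk a b c d e f *m sk 1 0 0 0 0 1 *m (sk a b c d e f *m sk 1 0 0 0 0 1)
  + (a + f) *: (sk a b c d e f *m sk 1 0 0 0 0 1) + (a*f - b*e + c*d) *: 1%:M = 0.
Proof. ent; ring. Qed.

Definition Avf a b c d e f (v : nat -> R) (i : nat) : R :=
  match i with
  | 0 => a * v 1%N + b * v 2%N + c * v 3%N
  | 1 => - a * v 0%N + d * v 2%N + e * v 3%N
  | 2 => - b * v 0%N - d * v 1%N + f * v 3%N
  | _ => - c * v 0%N - e * v 1%N - f * v 2%N end.
Definition Nf a b c d e f (v : nat -> R) (i : nat) : R :=
  match i with
  | 0 => - Avf a b c d e f v 1%N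
  | 1 => Avf a b c d e f v 0%N
  | 2 => - Avf a b c d e f v 3%N
  | _ => Avf a b c d e f v 2%N end - (a + f) / 2 * v i.
Definition om (u v : nat -> R) := u 0%N * v 1%N - u 1%N * v 0%N + u 2%N * v 3%N - u 3%N * v 2%N.
Definition Qm a b c d e f (u w : nat -> R) : M :=
  mxn (fun i j => match j with 0 => u i | 1 => Nf a b c d e f w i
     | 2 => Nf a b c d e f u i | _ => w i end).

Lemma QJ a b c d e f u w :
  let W1 := om u w in let W2 := om (Nf a b c d e f u) w in
  let D := ((a + f) / 2) ^+ 2 - (a * f - b * e + c * d) in
  (Qm a b c d e f u w)^T *m sk 1 0 0 0 0 1 *m Qm a b c d e f u w
   = sk W2 0 W1 (- D * W1) 0 W2.
Proof. move=> W1 W2 D; rewrite /W1 /W2 /D /Qm; ent; rewrite /Nf /Avf /om /=; by field. Qed.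

Lemma QA a b c d e f u w :
  let W1 := om u w in let W2 := om (Nf a b c d e f u) w in
  let h := (a + f) / 2 in
  let D := h ^+ 2 - (a * f - b * e + c * d) in
  (Qm a b c d e f u w)^T *m sk a b c d e f *m Qm a b c d e f u w
   = sk (h * W2 + D * W1) 0 (h * W1 + W2) (- h * D * W1 - D * W2) 0 (h * W2 + D * W1).
Proof. move=> W1 W2 h D; rewrite /W1 /W2 /D /h /Qm; ent; rewrite /Nf /Avf /om /=; by field. Qed.
End S.


Section S2.
Variable R : realType.
Local Notation M := 'M[R]_4.
Local Notation JJ := (sk 1 0 0 0 0 1 : M).

Ltac ent := apply: mx4P;
  repeat (first [rewrite mulE | rewrite trE | rewrite addE | rewrite oppE
                | rewrite scaleE | rewrite zeroE | rewrite oneE // | rewrite mxnE //]); rewrite /=.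

Lemma JJ2 : JJ *m JJ = - 1%:M.
Proof. by ent; ring. Qed.

Lemma sympl_inv (P : M) : P^T *m JJ *m P = JJ ->
  let L := - (JJ *m P^T *m JJ) in L *m P = 1%:M /\ P *m L = 1%:M.
Proof.
move=> HP L.
have H1 : L *m P = 1%:M.
  by rewrite /L mulNmx -!mulmxA (mulmxA P^T) HP JJ2 opprK.
by split => //; apply: mulmx1C.
Qed.

Lemma conj_back (P L A : M) : P *m L = 1%:M -> L^T *m (P^T *m A *m P) *m L = A.
Proof.
move=> HL.
by rewrite !mulmxA -trmx_mul HL trmx1 mul1mx -mulmxA HL mulmx1.
Qed.

Lemma conj_J (P L : M) : P^T *m JJ *m P = JJ -> P *m L = 1%:M -> L^T *m JJ *m L = JJ.
Proof. by move=> HP HL; rewrite -{1}HP conj_back. Qed.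

Lemma PJPt (P : M) : P^T *m JJ *m P = JJ -> P *m JJ *m P^T = JJ.
Proof.
move=> HP; have [_ H] := sympl_inv HP.
have E : (P *m (- (JJ *m P^T *m JJ))) *m JJ = P *m JJ *m P^T.
  by rewrite mulmxN mulNmx -!mulmxA JJ2 !mulmxN mulmx1 opprK !mulmxA.
by rewrite -E H mul1mx.
Qed.


Lemma sympl_invE (P : M) : P^T *m JJ *m P = JJ -> exists L, L *m P = 1%:M /\ P *m L = 1%:M.
Proof. by move=> HP; have := sympl_inv HP; eexists; eauto. Qed.

Lemma skew_sk (X : M) : X^T = - X ->
  X = sk (X (i4 0) (i4 1)) (X (i4 0) (i4 2)) (X (i4 0) (i4 3))
         (X (i4 1) (i4 2)) (X (i4 1) (i4 3)) (X (i4 2) (i4 3)).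
Proof.
move=> H.
have E k l : X (i4 l) (i4 k) = - X (i4 k) (i4 l).
  by have := congr1 (fun Y : M => Y (i4 k) (i4 l)) H; rewrite trE oppE.
have D k : X (i4 k) (i4 k) = 0 by have := E k k; lra.
by apply: mx4P; rewrite !mxnE //= ?D // E.
Qed.

Lemma CHs (X : M) : X^T = - X ->
  X *m JJ *m (X *m JJ) + sfun X *: (X *m JJ) + Pf X *: 1%:M = 0.
Proof.
move=> H; have C := CH (X (i4 0) (i4 1)) (X (i4 0) (i4 2)) (X (i4 0) (i4 3))
         (X (i4 1) (i4 2)) (X (i4 1) (i4 3)) (X (i4 2) (i4 3)).
by rewrite -(skew_sk H) in C; exact: C.
Qed.

Lemma trTJ (X : M) : X^T = - X -> \tr (X *m JJ) = - (2 * sfun X).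
Proof.
move=> H; rewrite {1}(skew_sk H) /mxtrace sum4 !mulE !mxnE //= /sfun; ring.
Qed.

Lemma skew_conj (P A : M) : A^T = - A -> (P^T *m A *m P)^T = - (P^T *m A *m P).
Proof. by move=> HA; rewrite !trmx_mul trmxK HA mulNmx mulmxN mulmxA. Qed.

Lemma invariance (P A : M) : P^T *m JJ *m P = JJ -> A^T = - A ->
  Pf (P^T *m A *m P) = Pf A /\ sfun (P^T *m A *m P) = sfun A.
Proof.
move=> HP HA; have [L [HLP HPL]] := sympl_invE HP.
have HB := skew_conj P HA.
set B := P^T *m A *m P in HB *.
set G := P^T; set K := L^T.
have GK : G *m K = 1%:M by rewrite /G /K -trmx_mul HLP trmx1.
have KG : K *m G = 1%:M by rewrite /G /K -trmx_mul HPL trmx1.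
have E1 : B *m JJ *m G = G *m (A *m JJ) by rewrite /B /G -!mulmxA (mulmxA P) PJPt.
have TB : B *m JJ = G *m (A *m JJ) *m K by rewrite -[LHS]mulmx1 -GK mulmxA E1.
have Hs : sfun B = sfun A.
  have : \tr (B *m JJ) = \tr (A *m JJ).
    by rewrite TB mxtrace_mulC (mulmxA K) KG mul1mx.
  by rewrite !trTJ //; lra.
split => //.
set Y := A *m JJ in TB *.
have E2 : G *m (Y *m Y + sfun A *: Y + Pf A *: 1%:M) *m K
   = B *m JJ *m (B *m JJ) + sfun A *: (B *m JJ) + Pf A *: 1%:M.
  rewrite TB !mulmxDr !mulmxDl -!scalemxAr -!scalemxAl mulmx1 GK.
  by rewrite -!mulmxA (mulmxA K G) KG mul1mx !mulmxA.
have CA := CHs HA; rewrite -/Y in CA.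
rewrite CA mulmx0 mul0mx in E2.
have CB := CHs HB; rewrite Hs in CB.
have : Pf B *: (1%:M : M) = Pf A *: 1%:M.
  by apply: (@addrI _ (B *m JJ *m (B *m JJ) + sfun A *: (B *m JJ))); rewrite CB E2.
move/(congr1 (fun Z : M => Z (i4 0) (i4 0))); rewrite !scaleE oneE //=; lra.
Qed.
End S2.


Section S3.
Variable R : realType.
Local Notation M := 'M[R]_4.
Local Notation JJ := (sk 1 0 0 0 0 1 : M).

Ltac ent := apply: mx4P;
  repeat (first [rewrite mulE | rewrite trE | rewrite addE | rewrite oppE
                | rewrite scaleE | rewrite zeroE | rewrite oneE // | rewrite mxnE //]); rewrite /=.

Lemma adjE (a b c d e f : R) :
  sk a b c d e f *m sk f (-e) d c (-b) a = - (a*f - b*e + c*d) *: (1%:M : M).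
Proof. by ent; ring. Qed.

Lemma sk_tr (a b c d e f : R) : (sk a b c d e f : M)^T = - sk a b c d e f.
Proof. by ent; ring. Qed.

Lemma unit_det (X Y : M) : X *m Y = 1%:M -> \det X != 0.
Proof. by move=> /mulmx1_unit [+ _]; rewrite unitmxE unitfE. Qed.

Lemma sk_S4 (a b c d e f : R) : a*f - b*e + c*d != 0 -> S4 (sk a b c d e f).
Proof.
move=> Hp; split; first exact: sk_tr.
apply: (@unit_det _ ((- (a*f - b*e + c*d))^-1 *: sk f (-e) d c (-b) a)).
by rewrite -scalemxAr adjE scalerA mulVf ?scale1r // oppr_eq0.
Qed.

Lemma S4_Pf (X : M) : S4 X -> Pf X != 0.
Proof.
move=> [HX Hd]; apply/negP => /eqP Hp.
have EX := skew_sk HX.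
set a := X (i4 0) (i4 1) in EX Hp; set b := X (i4 0) (i4 2) in EX Hp;
set c := X (i4 0) (i4 3) in EX Hp; set d := X (i4 1) (i4 2) in EX Hp;
set e := X (i4 1) (i4 3) in EX Hp; set f := X (i4 2) (i4 3) in EX Hp.
have HY : X *m sk f (-e) d c (-b) a = 0.
  by rewrite EX adjE; rewrite /Pf -/a -/b -/c -/d -/e -/f in Hp; rewrite Hp oppr0 scale0r.
have Xu : X \in unitmx by rewrite unitmxE unitfE.
have Y0 : (sk f (-e) d c (-b) a : M) = 0 by rewrite -(mulKmx Xu (sk f (-e) d c (-b) a)) HY mulmx0.
have g k l : (k < 4)%N -> (l < 4)%N -> (sk f (-e) d c (-b) a : M) (i4 k) (i4 l) = 0.
  by move=> hk hl; rewrite Y0 zeroE.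
have ha := g 2%N 3%N isT isT; have hb := g 1%N 3%N isT isT; have hc := g 1%N 2%N isT isT;
have hd := g 0%N 3%N isT isT; have he := g 0%N 2%N isT isT; have hf := g 0%N 1%N isT isT.
rewrite !mxnE //= in ha hb hc hd he hf.
have eb : b = 0 by lra.
have ee : e = 0 by lra.
have X0 : X = 0.
  rewrite EX ha eb hc hd ee hf; apply: mx4P; rewrite !mxnE ?zeroE //= ?oppr0 //.
by move: Hd; rewrite X0 det0 eqxx.
Qed.

Lemma exist_uw (a b c d e f : R) : ~ (b = 0 /\ c = 0 /\ d = 0 /\ e = 0 /\ a = f) ->
  exists u w, om u w = 0 /\ om (Nf a b c d e f u) w = 1.
Proof.
move=> Hns.
have [Hbc|Hbc] := eqVneq (b ^+ 2 + c ^+ 2) 0.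
  have hb : b = 0 by nra.
  have hc : c = 0 by nra.
  have [Hde|Hde] := eqVneq (d ^+ 2 + e ^+ 2) 0.
    have hd : d = 0 by nra.
    have he : e = 0 by nra.
    have Haf : a - f != 0.
      by apply/eqP => H; apply: Hns; do !split => //; lra.
    exists (fun i => match i with 0 => 1 | 2 => 1 | _ => 0 end).
    exists (fun i => match i with 1 => (a - f)^-1 | 3 => - (a - f)^-1 | _ => 0 end).
    rewrite /om /Nf /Avf /= hb hc hd he; split; first ring.
    by field.
  exists (fun i => match i with 1 => 1 | _ => 0 end).
  exists (fun i => match i with 2 => d / (d ^+ 2 + e ^+ 2) | 3 => e / (d ^+ 2 + e ^+ 2) | _ => 0 end).
  rewrite /om /Nf /Avf /= hb hc; split; first ring.
  by field.
exists (fun i => match i with 0 => 1 | _ => 0 end).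
exists (fun i => match i with 2 => b / (b ^+ 2 + c ^+ 2) | 3 => c / (b ^+ 2 + c ^+ 2) | _ => 0 end).
rewrite /om /Nf /Avf /=; split; first ring.
by field.
Qed.

Definition A0 (p q : R) : M := sk (q / 2) 0 1 (p - (q / 2) ^+ 2) 0 (q / 2).

Lemma normal_form (a b c d e f : R) : ~ (b = 0 /\ c = 0 /\ d = 0 /\ e = 0 /\ a = f) ->
  exists Q : M, Q^T *m JJ *m Q = JJ /\
    Q^T *m sk a b c d e f *m Q = A0 (a*f - b*e + c*d) (a + f).
Proof.
move=> /exist_uw [u [w [h1 h2]]].
exists (Qm a b c d e f u w).
have := QJ a b c d e f u w; have := QA a b c d e f u w; cbv zeta => -> ->.
rewrite h1 h2 /A0; split; congr sk; by field.
Qed.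

End S3.


Section S4s.
Variable R : realType.
Local Notation M := 'M[R]_4.
Local Notation JJ := (sk 1 0 0 0 0 1 : M).

Ltac ent := apply: mx4P;
  repeat (first [rewrite mulE | rewrite trE | rewrite addE | rewrite oppE
                | rewrite scaleE | rewrite zeroE | rewrite oneE // | rewrite mxnE //]); rewrite /=.

Definition scalarJ (X : M) := exists x, X = x *: JJ.

Lemma scal_sk (x : R) : x *: JJ = sk x 0 0 0 0 x.
Proof. by ent; ring. Qed.

Lemma Pf_scal (x : R) : Pf (x *: JJ) = x ^+ 2.
Proof. by rewrite scal_sk /Pf !mxnE //=; ring. Qed.

Lemma ns_param (X : M) : X^T = - X -> ~ scalarJ X ->
  ~ (X (i4 0) (i4 2) = 0 /\ X (i4 0) (i4 3) = 0 /\ X (i4 1) (i4 2) = 0 /\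
     X (i4 1) (i4 3) = 0 /\ X (i4 0) (i4 1) = X (i4 2) (i4 3)).
Proof.
move=> H Hns [h2 [h3 [h4 [h5 h6]]]]; apply: Hns; exists (X (i4 0) (i4 1)).
by rewrite scal_sk {1}(skew_sk H) h2 h3 h4 h5 h6.
Qed.

Lemma normal_form_mx (X : M) : X^T = - X -> ~ scalarJ X ->
  exists Q : M, Q^T *m JJ *m Q = JJ /\ Q^T *m X *m Q = A0 (Pf X) (sfun X).
Proof.
move=> H Hns; have [Q HQ] := normal_form (ns_param H Hns).
by rewrite -(skew_sk H) in HQ; exists Q; exact: HQ.
Qed.

Lemma congr_tr (X Y Z : M) : (X *m Y)^T *m Z *m (X *m Y) = Y^T *m (X^T *m Z *m X) *m Y.
Proof. by rewrite trmx_mul !mulmxA. Qed.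

Lemma orbit_ns (A : M) : S4 A -> ~ scalarJ A ->
  sp_orbit A = (fun B => S4 B /\ ~ scalarJ B /\ Pf B = Pf A /\ sfun B = sfun A).
Proof.
move=> [HA Hd] Hns; apply: functional_extensionality => B;
apply: propositional_extensionality; split.
  case=> P [HP ->]; rewrite /Sp4 JE in HP.
  have [L [HLP HPL]] := sympl_invE HP.
  have [h1 h2] := invariance HP HA.
  split; [split | split].
  - exact: skew_conj.
  - rewrite !det_mulmx det_tr !mulf_neq0 //; exact: unit_det HPL.
  - move=> [x Hx]; apply: Hns; exists x.
    have := conj_back A HPL; rewrite Hx -scalemxAr -scalemxAl (conj_J HP HPL) => <- //.
  - by split.
move=> [HB [HnsB [hp hs]]].
have [QA [QAJ QAA]] := normal_form_mx HA Hns.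
have [QB [QBJ QBB]] := normal_form_mx (proj1 HB) HnsB.
have [LB [_ HQL]] := sympl_invE QBJ.
exists (QA *m LB); split.
  by rewrite /Sp4 JE congr_tr QAJ (conj_J QBJ HQL).
by rewrite congr_tr QAA -hp -hs -QBB conj_back.
Qed.

Lemma orbit_scal (x : R) : sp_orbit (x *: JJ) = (fun B => B = x *: JJ).
Proof.
apply: functional_extensionality => B; apply: propositional_extensionality; split.
  by case=> P [HP ->]; rewrite /Sp4 JE in HP; rewrite -scalemxAr -scalemxAl HP.
move=> ->; exists 1%:M; split; first by rewrite /Sp4 trmx1 mul1mx mulmx1.
by rewrite trmx1 mul1mx mulmx1.
Qed.

Lemma sq_cases (x p : R) : 0 < p -> x ^+ 2 = p -> x = Num.sqrt p \/ x = - Num.sqrt p.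
Proof.
move=> hp hx; rewrite -hx sqrtr_sqr.
have [h|h] := lerP 0 x; [left; by rewrite ger0_norm | right; by rewrite ltr0_norm // opprK].
Qed.

Lemma LAplus_eq (p q : R) (A : M) : 0 < p -> S4 A -> ~ scalarJ A -> Pf A = p -> sfun A = q ->
  sp_orbit A = label_set (LAplus p q).
Proof.
move=> hp HA Hns hP hs; rewrite orbit_ns // /label_set JE hP hs.
apply: functional_extensionality => B; apply: propositional_extensionality; split.
  move=> [S [n [h1 h2]]]; do !split => //.
  - by move=> E; apply: n; exists (Num.sqrt p).
  - by move=> E; apply: n; exists (- Num.sqrt p); rewrite scaleNr.
move=> [S [n1 [n2 [h1 h2]]]]; do !split => //.
move=> [x Ex]; move: (h1); rewrite Ex Pf_scal => /(sq_cases hp) [] Hx.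
  by apply: n1; rewrite Ex Hx.
by apply: n2; rewrite Ex Hx scaleNr.
Qed.

Lemma LAminus_eq (p q : R) (A : M) : p < 0 -> S4 A -> ~ scalarJ A -> Pf A = p -> sfun A = q ->
  sp_orbit A = label_set (LAminus p q).
Proof.
move=> hp HA Hns hP hs; rewrite orbit_ns // /label_set hP hs.
apply: functional_extensionality => B; apply: propositional_extensionality; split.
  by move=> [S [n [h1 h2]]].
move=> [S [h1 h2]]; do !split => //.
move=> [x Ex]; move: h1; rewrite Ex Pf_scal => E.
have : 0 <= x ^+ 2 by exact: sqr_ge0.
lra.
Qed.

Lemma PfA0 (p q : R) : Pf (A0 p q) = p.
Proof. by rewrite /Pf /A0 !mxnE //=; ring. Qed.
Lemma sA0 (p q : R) : sfun (A0 p q) = q.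
Proof. by rewrite /sfun /A0 !mxnE //=; field. Qed.
Lemma A0_S4 (p q : R) : p != 0 -> S4 (A0 p q).
Proof. by move=> hp; apply: sk_S4; move: hp; apply: contra => /eqP H; apply/eqP; rewrite -H; ring. Qed.
Lemma A0_ns (p q : R) : ~ scalarJ (A0 p q).
Proof.
move=> [x /(congr1 (fun Z : M => Z (i4 0) (i4 3)))]; rewrite scaleE /A0 !mxnE //= mulr0.
by move/eqP; rewrite oner_eq0.
Qed.

End S4s.


Section S5.
Variable R : realType.
Local Notation M := 'M[R]_4.
Local Notation JJ := (sk 1 0 0 0 0 1 : M).

Definition wit (l : label R) : M :=
  match l with
  | LJplus p => Num.sqrt p *: JJ
  | LJminus p => - (Num.sqrt p *: JJ)
  | LAplus p q => A0 p q
  | LAminus p q => A0 p q end.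

Lemma wit_mem l : valid_label l -> label_set l (wit l).
Proof.
case: l => [p|p|p q|p q] /= hp; rewrite ?JE //.
  split; first by apply: A0_S4; rewrite gt_eqF.
  split; first by move=> E; apply: (@A0_ns R p q); exists (Num.sqrt p).
  split; first by move=> E; apply: (@A0_ns R p q); exists (- Num.sqrt p); rewrite scaleNr.
  by rewrite PfA0 sA0.
split; first by apply: A0_S4; rewrite lt_eqF.
by rewrite PfA0 sA0.
Qed.

Lemma e01 (x : R) : (x *: JJ) (i4 0) (i4 1) = x.
Proof. by rewrite scaleE mxnE //= mulr1. Qed.
Lemma e03 (x : R) : (x *: JJ) (i4 0) (i4 3) = 0.
Proof. by rewrite scaleE mxnE //= mulr0. Qed.
Lemma A003 (p q : R) : (A0 p q) (i4 0) (i4 3) = 1.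
Proof. by rewrite mxnE. Qed.
Lemma PfN (x : R) : Pf (- (x *: JJ)) = x ^+ 2.
Proof. by rewrite -scaleNr Pf_scal sqrrN. Qed.

Lemma sqrt_inj (p1 p2 : R) : 0 < p1 -> 0 < p2 -> Num.sqrt p1 = Num.sqrt p2 -> p1 = p2.
Proof.
by move=> h1 h2 E; rewrite -(sqr_sqrtr (ltW h1)) -(sqr_sqrtr (ltW h2)) E.
Qed.

Lemma inj_labels (l1 l2 : label R) : valid_label l1 -> valid_label l2 ->
  label_set l1 = label_set l2 -> l1 = l2.
Proof.
move=> h1 h2 E; have H1 := wit_mem h1; rewrite E in H1; clear E.
have g1 := fun (X Y : M) (H : X = Y) => congr1 (fun Z : M => Z (i4 0) (i4 1)) H.
have g3 := fun (X Y : M) (H : X = Y) => congr1 (fun Z : M => Z (i4 0) (i4 3)) H.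
case: l1 h1 H1 => [p1|p1|p1 q1|p1 q1] /= h1 H1;
case: l2 h2 H1 => [p2|p2|p2 q2|p2 q2] /= h2 H1; rewrite ?JE in H1.
- by move/g1: H1; rewrite !e01 => /(sqrt_inj h1 h2) ->.
- move/g1: H1; rewrite oppE !e01 => H.
  have s1 : 0 < Num.sqrt p1 by rewrite sqrtr_gt0.
  have s2 : 0 < Num.sqrt p2 by rewrite sqrtr_gt0.
  exfalso; lra.
- case: H1 => _ [n1 [_ [hp _]]]; rewrite Pf_scal sqr_sqrtr ?ltW // in hp.
  by case: n1; rewrite hp.
- case: H1 => _ [hp _]; rewrite Pf_scal sqr_sqrtr ?ltW // in hp; exfalso; lra.
- move/g1: H1; rewrite oppE !e01 => H.
  have s1 : 0 < Num.sqrt p1 by rewrite sqrtr_gt0.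
  have s2 : 0 < Num.sqrt p2 by rewrite sqrtr_gt0.
  exfalso; lra.
- move/g1: H1; rewrite !oppE !e01 => /eqP; rewrite eqr_opp => /eqP /(sqrt_inj h1 h2) ->.
  by [].
- case: H1 => _ [_ [n2 [hp _]]]; rewrite PfN sqr_sqrtr ?ltW // in hp.
  by case: n2; rewrite hp.
- case: H1 => _ [hp _]; rewrite PfN sqr_sqrtr ?ltW // in hp; exfalso; lra.
- by move/g3: H1; rewrite A003 e03 => /eqP; rewrite oner_eq0.
- by move/g3: H1; rewrite A003 oppE e03 oppr0 => /eqP; rewrite oner_eq0.
- by case: H1 => _ [_ [_ [hp hq]]]; rewrite PfA0 in hp; rewrite sA0 in hq; rewrite hp hq.
- case: H1 => _ [hp _]; rewrite PfA0 in hp; exfalso; lra.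
- by move/g3: H1; rewrite A003 e03 => /eqP; rewrite oner_eq0.
- by move/g3: H1; rewrite A003 oppE e03 oppr0 => /eqP; rewrite oner_eq0.
- case: H1 => _ [_ [_ [hp hq]]]; rewrite PfA0 in hp; exfalso; lra.
- by case: H1 => _ [hp hq]; rewrite PfA0 in hp; rewrite sA0 in hq; rewrite hp hq.
Qed.

End S5.

Unset Implicit Arguments.
Set Strict Implicit.

Theorem theorem2p2 (R : realType) :
  (forall O : 'M[R]_4 -> Prop,
      (exists A, S4 A /\ O = sp_orbit A) <->
      (exists l : label R, valid_label l /\ O = label_set l))
  /\ (forall l1 l2 : label R, valid_label l1 -> valid_label l2 ->
        label_set l1 = label_set l2 -> l1 = l2).
Proof.
split; last exact: inj_labels.
move=> O; split.
  case=> A [HA ->].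
  have Hp := S4_Pf HA.
  have [[x Ex]|Hns] := classic (scalarJ A).
    have hx : x != 0.
      by apply: contraNneq Hp => hx0; rewrite Ex hx0 Pf_scal expr0n.
    have [hlt|hgt|heq] := ltrgtP x 0; last by rewrite heq eqxx in hx.
      exists (LJminus (x ^+ 2)); split; first by rewrite /=; nra.
      by rewrite Ex orbit_scal /label_set JE sqrtr_sqr ltr0_norm // scaleNr opprK.
    exists (LJplus (x ^+ 2)); split; first by rewrite /=; nra.
    by rewrite Ex orbit_scal /label_set JE sqrtr_sqr ger0_norm // ltW.
  have [hlt|hgt|heq] := ltrgtP (Pf A) 0; last by rewrite heq eqxx in Hp.
    exists (LAminus (Pf A) (sfun A)); split => //; exact: LAminus_eq.
  exists (LAplus (Pf A) (sfun A)); split => //; exact: LAplus_eq.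
case=> l [Hl ->]; case: l Hl => [p|p|p q|p q] /= hp.
- exists (Num.sqrt p *: (sk 1 0 0 0 0 1 : 'M[R]_4)); split.
    rewrite scal_sk; apply: sk_S4.
    have -> : Num.sqrt p * Num.sqrt p - 0 * 0 + 0 * 0 = Num.sqrt p ^+ 2.
      by ring.
    by rewrite sqr_sqrtr ?ltW // gt_eqF.
  by rewrite orbit_scal /label_set JE.
- exists ((- Num.sqrt p) *: (sk 1 0 0 0 0 1 : 'M[R]_4)); split.
    rewrite scal_sk; apply: sk_S4.
    have -> : (- Num.sqrt p) * (- Num.sqrt p) - 0 * 0 + 0 * 0 = Num.sqrt p ^+ 2.
      by ring.
    by rewrite sqr_sqrtr ?ltW // gt_eqF.
  by rewrite orbit_scal /label_set JE scaleNr.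
- exists (A0 p q); split; first by apply: A0_S4; rewrite gt_eqF.
  by rewrite (LAplus_eq (q := q) hp) ?PfA0 ?sA0 //; [apply: A0_S4; rewrite gt_eqF | exact: A0_ns].
- exists (A0 p q); split; first by apply: A0_S4; rewrite lt_eqF.
  by rewrite (LAminus_eq (q := q) hp) ?PfA0 ?sA0 //; [apply: A0_S4; rewrite lt_eqF | exact: A0_ns].
Qed.
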